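(* Consider $K$ arms, each a two-state irreducible Markov chain on $\{0,1\}$ with transition probabilities $p_{01}^i,p_{10}^i$, let $\sigma_i=p_{01}^i+p_{10}^i$, $\mu_i=p_{01}^i/\sigma_i$, arm 1 optimal ($\mu_1=\max_j\mu_j$), $\Delta_i=\mu_1-\mu_i$, and let $U=\sum_{i\neq1}\frac{4L}{\mu_1-\mu_i}$ with $L=\frac{360}{\min_j\sigma_j}$. Define $B_a=\sum_{i\neq1}\Delta_i\Big[\frac{2\,\mathbb 1\{p_{01}^1p_{10}^i<p_{10}^1\}}{D(p_{01}^i\|\frac{p_{01}^1p_{10}^i}{p_{10}^1})}+\frac{2}{D(p_{10}^i\|\frac{p_{10}^1p_{01}^i}{p_{01}^1})}\Big]$, $B_b=\sum_{i\neq1}\Delta_i\Big[\frac{\mathbb 1\{\mu_1p_{10}^i<1-\mu_1\}}{D(p_{01}^i\|\frac{\mu_1p_{10}^i}{1-\mu_1})}+\frac{1}{D(p_{10}^i\|\frac{p_{01}^i(1-\mu_1)}{\mu_1})}\Big]$, $B_c=\sum_{i\neq1}\frac{2\Delta_i}{D(\mu_i\|\frac{p_{01}^1}{p_{01}^1+p_{10}^1})}$, $B_d=\sum_{i\neq1}\frac{\Delta_i}{D(\mu_i\|\mu_1)}$. Then: (i) if every suboptimal arm is i.i.d. ($\sigma_i=1$ for $i\neq1$), the asymptotic regret bound of TV-KL-UCB ($B_c$ if arm 1 is truly Markovian, $B_d$ if arm 1 is i.i.d.) is smaller than $U$; (ii) if every suboptimal arm is truly Markovian ($\sigma_i\ne1$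 for $i\neq1$) and $\min_j\sigma_j\ge\frac1{1440}$, the asymptotic regret bound of TV-KL-UCB ($B_a$ if arm 1 is truly Markovian, $B_b$ if arm 1 is i.i.d.) is smaller than $U$.
   Context: $D(a\|b)=a\log\frac ab+(1-a)\log\frac{1-a}{1-b}$ is the Bernoulli KL divergence. An arm is i.i.d. if $p_{01}^i+p_{10}^i=1$ and truly Markovian otherwise. The quantities $B_a,\dots,B_d$ are the upper bounds on $\limsup_n R_n/\log n$ for the TV-KL-UCB algorithm in the respective cases, and $U$ is the asymptotic regret upper bound (on $\limsup_n R_n/\log n$) of the sample-mean UCB algorithm UCB-SM of Tekin and Liu for two-state arms with reward $r(s)=s$. *)

(* Defs.v *)
From HB Require Import structures.
From mathcomp Require Import all_boot all_order all_algebra.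
From mathcomp Require Import all_classical all_reals.
From mathcomp Require Import exp.
Set Implicit Arguments. Unset Strict Implicit. Unset Printing Implicit Defensive.
Import Order.TTheory GRing.Theory Num.Theory.
Local Open Scope ring_scope.

Section Defs.
Variable R : realType.

Definition klD (a b : R) : R :=
  a * ln (a / b) + (1 - a) * ln ((1 - a) / (1 - b)).

Variables (K : nat) (p01 p10 : 'I_K -> R) (i1 : 'I_K).

Definition sig (i : 'I_K) : R := p01 i + p10 i.
Definition mu (i : 'I_K) : R := p01 i / sig i.
Definition gap (i : 'I_K) : R := mu i1 - mu i.

Definition sigmin : R := \big[Order.min/sig i1]_(j : 'I_K) sig j.
Definition Lconst : R := 360 / sigmin.

(* Asymptotic regret bound of UCB-SM (Tekin & Liu) *)
Definition U_SM : R := \sum_(i : 'I_K | i != i1) (4 * Lconst) / (mu i1 - mu i).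

Definition B_a : R :=
  \sum_(i : 'I_K | i != i1) gap i *
    (2 * (p01 i1 * p10 i < p10 i1)%R%:R
         / klD (p01 i) (p01 i1 * p10 i / p10 i1)
     + 2 / klD (p10 i) (p10 i1 * p01 i / p01 i1)).

Definition B_b : R :=
  \sum_(i : 'I_K | i != i1) gap i *
    ((mu i1 * p10 i < 1 - mu i1)%R%:R
         / klD (p01 i) (mu i1 * p10 i / (1 - mu i1))
     + 1 / klD (p10 i) (p01 i * (1 - mu i1) / mu i1)).

Definition B_c : R :=
  \sum_(i : 'I_K | i != i1) 2 * gap i / klD (mu i) (p01 i1 / (p01 i1 + p10 i1)).

Definition B_d : R :=
  \sum_(i : 'I_K | i != i1) gap i / klD (mu i) (mu i1).

End Defs.

(* Main.v *)
Require Import Defs.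
From HB Require Import structures.
From mathcomp Require Import all_boot all_order all_algebra.
From mathcomp Require Import all_classical all_reals.
From mathcomp Require Import exp.
From mathcomp Require Import ring lra.
Import Order.TTheory GRing.Theory Num.Theory.
Local Open Scope ring_scope.

Lemma term_lb (R : realType) (s t : R) : 0 <= s -> 0 < t ->
  2*s^+2 - 2*s*t <= s^+2 * ln (s^+2/t^+2).
Proof.
move=> s0 t0; have [->|sn0] := eqVneq s 0.
  by rewrite expr0n /= !mul0r mulr0 mul0r subrr.
have sp : 0 < s by rewrite lt_def sn0 s0.
have h1 : ln (t / s) <= t / s - 1.
  have ts : 0 < t / s by apply: divr_gt0.
  have h : -1 < t / s - 1 by lra.
  by have := le_ln1Dx h; rewrite addrC subrK.
have e1 : s^+2/t^+2 = (s/t)^+2 by rewrite expr_div_n.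
rewrite e1 lnXn ?divr_gt0 //.
rewrite ln_div ?posrE // in h1 *.
have e2 : s * (t / s) = t by field; rewrite sn0.
have : s^+2 * (ln t - ln s) <= s^+2 * (t / s - 1).
  by apply: ler_wpM2l => //; apply: exprn_ge0.
rewrite ln_div ?posrE //.
have -> : s^+2 * ((ln s - ln t) *+ 2) = - 2 * (s^+2 * (ln t - ln s)) by rewrite mulr2n; ring.
have -> : s^+2 * (t/s - 1) = s * t - s^+2.
  rewrite mulrBr mulr1 expr2 -mulrA e2 //.
lra.
Qed.

Lemma kl_lb (R : realType) (a b : R) : 0 < a <= 1 -> 0 < b < 1 ->
  (a - b)^+2 <= 2 * (a + b) * klD a b.
Proof.
case/andP=> a0 a1; case/andP=> b0 b1.
set s := Num.sqrt a; set t := Num.sqrt b.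
set u := Num.sqrt (1 - a); set v := Num.sqrt (1 - b).
have ha : a = s^+2 by rewrite sqr_sqrtr // ltW.
have hb : b = t^+2 by rewrite sqr_sqrtr // ltW.
have hu : 1 - a = u^+2 by rewrite sqr_sqrtr // subr_ge0.
have hv : 1 - b = v^+2 by rewrite sqr_sqrtr // subr_ge0 ltW.
have s0 : 0 <= s by apply: sqrtr_ge0.
have t0 : 0 < t by rewrite sqrtr_gt0.
have u0 : 0 <= u by apply: sqrtr_ge0.
have v0 : 0 < v by rewrite sqrtr_gt0 subr_gt0.
have k1 := @term_lb _ s t s0 t0.
have k2 := @term_lb _ u v u0 v0.
have hD : 2*s^+2 - 2*s*t + (2*u^+2 - 2*u*v) <= klD a b.
  rewrite /klD hu hv {1 2}ha {1}hb; lra.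
have hH : (s - t)^+2 <= 2*s^+2 - 2*s*t + (2*u^+2 - 2*u*v).
  have : 0 <= (u - v)^+2 by apply: sqr_ge0.
  nra.
have hst : (a - b)^+2 <= 2 * (a + b) * (s - t)^+2.
  rewrite ha hb.
  have : 0 <= (s - t)^+2 * (s - t)^+2 by apply: mulr_ge0; apply: sqr_ge0.
  nra.
have ab0 : 0 <= 2 * (a + b) by lra.
apply: (le_trans hst); apply: ler_wpM2l => //; exact: le_trans hH hD.
Qed.

Lemma kl_gap (R : realType) (a b g s : R) : 0 < a <= 1 -> 0 < b < 1 ->
  g^+2 * s * (a + b) <= (a - b)^+2 -> g^+2 * s <= 2 * klD a b /\ 0 <= klD a b.
Proof.
move=> ha hb h; have k := @kl_lb _ a b ha hb.
case/andP: ha => a0 _; case/andP: hb => b0 _.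
have ab : 0 < a + b by lra.
split.
  rewrite -(ler_pM2l ab). have : 0 <= (a-b)^+2 by apply: sqr_ge0. nra.
have : 0 <= (a-b)^+2 by apply: sqr_ge0. nra.
Qed.

Lemma frac_le (R : realType) (x D c : R) : 0 <= x -> x <= c * D -> 0 <= D -> 0 <= c ->
  x / D <= c.
Proof.
move=> x0 h D0 c0; have [->|Dn] := eqVneq D 0; first by rewrite invr0 mulr0.
have Dp : 0 < D by rewrite lt_def Dn D0.
by rewrite ler_pdivrMr // mulrC.
Qed.

Lemma fin (R : realType) (T m g : R) : 0 < m -> 0 < g -> T * (m * g) <= 8 ->
  T < 4 * (360 / m) / g.
Proof.
move=> m0 g0 h.
have mg : 0 < m * g by apply: mulr_gt0.
have -> : 4 * (360 / m) / g = 1440 / (m * g).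
  by field; apply/andP; split; rewrite gt_eqF.
rewrite ltr_pdivlMr //; lra.
Qed.

Lemma caseA (R : realType) (P Q p q m k ind b1 b2 g : R) :
  g = P / (P + Q) - p / (p + q) ->
  0 < P <= 1 -> 0 < Q <= 1 -> 0 < p <= 1 -> 0 < q <= 1 ->
  p * Q < P * q -> 0 < m <= p + q -> 0 <= k <= 2 ->
  b1 = P * q / Q -> b2 = Q * p / P ->
  (ind = 0 \/ (ind = 1 /\ b1 < 1)) ->
  g * (k * ind / klD p b1 + k / klD q b2)
    < 4 * (360 / m) / g.
Proof.
move=> -> {g} /andP[P0 P1] /andP[Q0 Q1] /andP[p0 p1] /andP[q0 q1] hlt /andP[m0 m1]
  /andP[k0 k2] eb1 eb2 hind.
set g := P / (P + Q) - p / (p + q).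
set e := P * q - p * Q.
have e0 : 0 < e by rewrite /e; lra.
have PQ : 0 < P + Q by lra.
have pq : 0 < p + q by lra.
have eg : g = e / ((P + Q) * (p + q)).
  rewrite /g /e; field; apply/andP; split; rewrite gt_eqF //.
have g0 : 0 < g by rewrite eg; apply: divr_gt0 => //; apply: mulr_gt0.
have Hpos : 0 <= (P + Q)^+2 * (p + q) - Q * (p * Q + P * q) /\
            0 <= (P + Q)^+2 * (p + q) - P * (P * q + Q * p).
  have Pp : 0 <= P * p by apply: mulr_ge0; lra.
  have Qq : 0 <= Q * q by apply: mulr_ge0; lra.
  have X : 0 <= (P + Q) * (p + q) by apply: mulr_ge0; lra.
  split.
    have -> : (P + Q)^+2 * (p + q) - Q * (p * Q + P * q) = P * ((P + Q) * (p + q)) + Q * (P * p + Q * q) by ring.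
    by apply: addr_ge0; apply: mulr_ge0 => //; lra.
  have -> : (P + Q)^+2 * (p + q) - P * (P * q + Q * p) = Q * ((P + Q) * (p + q)) + P * (P * p + Q * q) by ring.
  by apply: addr_ge0; apply: mulr_ge0 => //; lra.
case: Hpos => Hp1 Hp2.
have HD2 : g^+2 * (p + q) <= 2 * klD q b2 /\ 0 <= klD q b2.
  apply: kl_gap => //; first by rewrite q0 q1.
    rewrite eb2; apply/andP; split; first by apply: divr_gt0 => //; apply: mulr_gt0.
    rewrite ltr_pdivrMr //.
    have : P * q <= P * 1 by apply: ler_wpM2l; lra.
    have : Q * p = p * Q by rewrite mulrC.
    lra.
  rewrite -subr_ge0.
  have -> : (q - b2)^+2 - g^+2 * (p + q) * (q + b2) =
     e^+2 * ((P + Q)^+2 * (p + q) - P * (P * q + Q * p)) / (P^+2 * (P + Q)^+2 * (p + q)).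
    rewrite eb2 eg /e; field.
    by rewrite !gt_eqF //.
  apply: divr_ge0; first by apply: mulr_ge0 => //; apply: sqr_ge0.
  by apply: mulr_ge0; [apply: mulr_ge0; apply: exprn_ge0 | ]; lra.
have T2 : k / klD q b2 * (m * g) * g <= 4.
  case: HD2 => h1 h2.
  have -> : k / klD q b2 * (m * g) * g = k * (g^+2 * m / klD q b2).
    by ring.
  have : g^+2 * m / klD q b2 <= 2.
    apply: frac_le => //; first by apply: mulr_ge0 => //; [apply: sqr_ge0 | lra].
    have : g^+2 * m <= g^+2 * (p + q) by apply: ler_wpM2l; [apply: sqr_ge0|].
    lra.
  have : 0 <= g^+2 * m / klD q b2.
    by apply: divr_ge0 => //; apply: mulr_ge0 => //; [apply: sqr_ge0 | lra].
  nra.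
have T1 : k * ind / klD p b1 * (m * g) * g <= 4.
  case: hind => [->|[-> hb1]]; first by rewrite mulr0 !mul0r.
  have HD1 : g^+2 * (p + q) <= 2 * klD p b1 /\ 0 <= klD p b1.
    apply: kl_gap => //; first by rewrite p0 p1.
      rewrite hb1 andbT eb1; by apply: divr_gt0 => //; apply: mulr_gt0.
    rewrite -subr_ge0.
    have -> : (p - b1)^+2 - g^+2 * (p + q) * (p + b1) =
       e^+2 * ((P + Q)^+2 * (p + q) - Q * (p * Q + P * q)) / (Q^+2 * (P + Q)^+2 * (p + q)).
      rewrite eb1 eg /e; field.
      by rewrite !gt_eqF //.
    apply: divr_ge0; first by apply: mulr_ge0 => //; apply: sqr_ge0.
    by apply: mulr_ge0; [apply: mulr_ge0; apply: exprn_ge0 | ]; lra.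
  case: HD1 => h1 h2.
  rewrite mulr1.
  have -> : k / klD p b1 * (m * g) * g = k * (g^+2 * m / klD p b1).
    by ring.
  have : g^+2 * m / klD p b1 <= 2.
    apply: frac_le => //; first by apply: mulr_ge0 => //; [apply: sqr_ge0 | lra].
    have : g^+2 * m <= g^+2 * (p + q) by apply: ler_wpM2l; [apply: sqr_ge0|].
    lra.
  have : 0 <= g^+2 * m / klD p b1.
    by apply: divr_ge0 => //; apply: mulr_ge0 => //; [apply: sqr_ge0 | lra].
  nra.
apply: fin => //.
have -> : g * (k * ind / klD p b1 + k / klD q b2) * (m * g) =
  k * ind / klD p b1 * (m * g) * g + k / klD q b2 * (m * g) * g by ring.
lra.
Qed.

Lemma caseC (R : realType) (a b m k : R) : 0 < a < 1 -> 0 < b < 1 -> a < b ->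
  0 < m <= 1 -> 0 <= k <= 2 ->
  k * (b - a) / klD a b < 4 * (360 / m) / (b - a).
Proof.
move=> ha hb hab /andP[m0 m1] /andP[k0 k2].
have ha' : 0 < a <= 1 by case/andP: ha => -> /ltW ->.
have [h1 h2] : (b - a)^+2 * (1/2) <= 2 * klD a b /\ 0 <= klD a b.
  apply: kl_gap => //.
  case/andP: ha => a0 a1; case/andP: hb => b0 b1.
  have -> : (a - b)^+2 = (b - a)^+2 by rewrite -sqrrN opprB.
  have : 0 <= (b - a)^+2 by apply: sqr_ge0.
  nra.
have g0 : 0 < b - a by rewrite subr_gt0.
apply: fin => //.
have -> : k * (b - a) / klD a b * (m * (b - a)) = k * m * ((b - a)^+2 / klD a b).
  by ring.
have : (b - a)^+2 / klD a b <= 4.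
  apply: frac_le => //; [apply: sqr_ge0 | lra].
have : 0 <= (b - a)^+2 / klD a b by apply: divr_ge0 => //; apply: sqr_ge0.
have : 0 <= k * m <= 2 by apply/andP; split; nra.
nra.
Qed.

Lemma mu_lt (R : realType) (P Q p q : R) : 0 < P -> 0 < Q -> 0 < p -> 0 < q ->
  p / (p + q) < P / (P + Q) -> p * Q < P * q.
Proof.
move=> P0 Q0 p0 q0 h.
have pq : 0 < p + q by lra.
have PQ : 0 < P + Q by lra.
rewrite ltr_pdivrMr // mulrAC ltr_pdivlMr // in h.
lra.
Qed.

Theorem theorem2 (R : realType) (K : nat) (p01 p10 : 'I_K -> R) (i1 : 'I_K) :
  (2 <= K)%N ->
  (* each arm is an irreducible two-state Markov chain *)
  (forall i, 0 < p01 i <= 1) ->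
  (forall i, 0 < p10 i <= 1) ->
  (* arm i1 is the (unique) optimal arm *)
  (forall i, i != i1 -> mu p01 p10 i < mu p01 p10 i1) ->
  (* (i) all suboptimal arms i.i.d. *)
  ((forall i, i != i1 -> sig p01 p10 i = 1) ->
     (sig p01 p10 i1 != 1 -> B_c p01 p10 i1 < U_SM p01 p10 i1) /\
     (sig p01 p10 i1 = 1 -> B_d p01 p10 i1 < U_SM p01 p10 i1)) /\
  (* (ii) all suboptimal arms truly Markovian, min sigma >= 1/1440 *)
  ((forall i, i != i1 -> sig p01 p10 i != 1) ->
   1 / 1440 <= sigmin p01 p10 i1 ->
     (sig p01 p10 i1 != 1 -> B_a p01 p10 i1 < U_SM p01 p10 i1) /\
     (sig p01 p10 i1 = 1 -> B_b p01 p10 i1 < U_SM p01 p10 i1)).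
Proof.
move=> K2 h01 h10 hmu.
have sigp : forall i, 0 < sig p01 p10 i.
  move=> i; rewrite /sig; have := h01 i; have := h10 i; case/andP=> ? _; case/andP=> ? _; lra.
have mu01 : forall i, 0 < mu p01 p10 i < 1.
  move=> i; rewrite /mu; have := sigp i; rewrite /sig => s0.
  have := h01 i; have := h10 i; case/andP=> ? _; case/andP=> ? _.
  apply/andP; split; first by apply: divr_gt0.
  rewrite ltr_pdivrMr //; lra.
have mle : forall i, sigmin p01 p10 i1 <= sig p01 p10 i.
  by move=> i; rewrite /sigmin; apply: bigmin_le.
have m0 : 0 < sigmin p01 p10 i1.
  by rewrite /sigmin; apply: lt_bigmin => // i _; apply: sigp.
have [j hj] : exists j : 'I_K, j != i1.
  case: (eqVneq (val i1) 0%N) => h.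
    have o1 : (1 < K)%N by [].
    exists (Ordinal o1); apply/eqP => e; move: h; rewrite -e.
    by [].
  have o0 : (0 < K)%N by apply: leq_trans K2.
  exists (Ordinal o0); apply/eqP => e; move: h; rewrite -e.
  by rewrite eqxx.
have hasj : has (fun i : 'I_K => i != i1) (index_enum 'I_K).
  by apply/hasP; exists j => //; rewrite mem_index_enum.
split.
  move=> hiid.
  have m1 : 0 < sigmin p01 p10 i1 <= 1.
    by rewrite m0 /=; rewrite -(hiid j hj); apply: mle.
  split.
    move=> _; rewrite /B_c /U_SM; apply: ltr_sum => // i hi.
    rewrite /Lconst /gap.
    apply: (@caseC _ (mu p01 p10 i) (mu p01 p10 i1)) => //; last by lra.
    exact: hmu.
  move=> _; rewrite /B_d /U_SM; apply: ltr_sum => // i hi.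
  rewrite /Lconst /gap -[X in X / klD _ _]mul1r.
  apply: (@caseC _ (mu p01 p10 i) (mu p01 p10 i1)) => //; last by lra.
  exact: hmu.
move=> _ _.
have aux : forall i, i != i1 -> p01 i * p10 i1 < p01 i1 * p10 i.
  move=> i hi; have := hmu i hi; rewrite /mu /sig.
  have := h01 i; have := h10 i; have := h01 i1; have := h10 i1.
  do 4! case/andP=> ? _.
  by apply: mu_lt.
split.
  move=> _; rewrite /B_a /U_SM; apply: ltr_sum => // i hi.
  rewrite /Lconst /gap.
  refine (@caseA _ (p01 i1) (p10 i1) (p01 i) (p10 i) (sigmin p01 p10 i1) 2
   (p01 i1 * p10 i < p10 i1)%R%:R (p01 i1 * p10 i / p10 i1) (p10 i1 * p01 i / p01 i1)
   (mu p01 p10 i1 - mu p01 p10 i) _ _ _ _ _ _ _ _ _ _ _).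
  - by rewrite /gap /mu /sig.
  - exact: h01.
  - exact: h10.
  - exact: h01.
  - exact: h10.
  - exact: aux.
  - by rewrite m0 mle.
  - by apply/andP; split; lra.
  - by [].
  - by [].
  - case: ltP => hc; [right; split => //| by left].
    rewrite ltr_pdivrMr ?mul1r //; by case/andP: (h10 i1).
move=> hs.
have hm : mu p01 p10 i1 = p01 i1 by rewrite /mu hs divr1.
have h1m : 1 - mu p01 p10 i1 = p10 i1.
  by rewrite hm; move: hs; rewrite /sig => <-; rewrite addrC addKr.
rewrite /B_b /U_SM; apply: ltr_sum => // i hi.
rewrite /Lconst /gap.
set g := mu p01 p10 i1 - mu p01 p10 i.
have eg : g = p01 i1 / (p01 i1 + p10 i1) - p01 i / (p01 i + p10 i) by [].
rewrite h1m hm.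
have := @caseA _ (p01 i1) (p10 i1) (p01 i) (p10 i) (sigmin p01 p10 i1) 1
   (p01 i1 * p10 i < p10 i1)%R%:R (p01 i1 * p10 i / p10 i1) (p01 i * p10 i1 / p01 i1)
   g eg (h01 i1) (h10 i1) (h01 i) (h10 i) (aux i hi).
rewrite (mul1r ((p01 i1 * p10 i < p10 i1)%R%:R)); apply.
- by rewrite m0 mle.
- by apply/andP; split; lra.
- by [].
- by rewrite (mulrC (p01 i)).
- case: ltP => hc; [right; split => //| by left].
  rewrite ltr_pdivrMr ?mul1r //; by case/andP: (h10 i1).
Qed.
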